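(* For integers $r\ge 2$ and $n\ge r+1$, $$\mathrm{ex}_r(n,\Delta_{r+1}^r)\le \frac{(r-1)(n-r+1)+1}{r(n-r)}\binom{n}{r}.$$
   Context: An $r$-uniform hypergraph ($r$-graph) is a pair $(V,E)$ with $E$ a family of $r$-element subsets of $V$. $\Delta_{r+1}^r$ denotes the complete $r$-graph on $r+1$ vertices (all $r$-subsets of an $(r+1)$-set as edges). $\mathrm{ex}_r(n,\Delta_{r+1}^r)$ is the maximum number of edges in an $r$-graph on $n$ vertices containing no sub-hypergraph isomorphic to $\Delta_{r+1}^r$. *)

(* Defs.v *)
From mathcomp Require Import all_boot all_order all_algebra.
Set Implicit Arguments. Unset Strict Implicit. Unset Printing Implicit Defensive.

Definition is_rgraph (r n : nat) (E : {set {set 'I_n}}) : bool :=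
  [forall e in E, #|e| == r].

(* E contains a copy of Delta_{r+1}^r: an (r+1)-set S all of whose
   r-subsets are edges of E. *)
Definition contains_Delta (r n : nat) (E : {set {set 'I_n}}) : bool :=
  [exists S : {set 'I_n}, (#|S| == r.+1) &&
     [forall e : {set 'I_n}, ((e \subset S) && (#|e| == r)) ==> (e \in E)]].

Definition ex_Delta (r n : nat) : nat :=
  \max_(E : {set {set 'I_n}} | is_rgraph r E && ~~ contains_Delta r E) #|E|.

(* Main.v *)
Require Import Defs.
From mathcomp Require Import all_boot all_order all_algebra.
From mathcomp Require Import zify.

Lemma card_sum (I : finType) (B : {set I}) (P : pred I) :
  #|[set v in B | P v]| = \sum_(v in B) (P v : nat).
Proof.
rewrite -sum1dep_card big_mkcondr; apply: eq_bigr => i _; by case: (P i).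
Qed.

Lemma amgm2 a b : 2 * (a * b) <= a ^ 2 + b ^ 2.
Proof.
wlog h : a b / a <= b.
  move=> H; case: (leqP a b) => h; first exact: H.
  rewrite [a * b]mulnC addnC; apply: H; exact: ltnW.
rewrite -(subnKC h); move: (b - a) => k; nia.
Qed.

Lemma cs_nat (I : finType) (X : {set I}) (f : I -> nat) :
  (\sum_(i in X) f i) ^ 2 <= #|X| * \sum_(i in X) f i ^ 2.
Proof.
have step : \sum_(i in X) \sum_(j in X) (2 * (f i * f j))
   <= \sum_(i in X) \sum_(j in X) (f i ^ 2 + f j ^ 2).
  apply: leq_sum => i _; apply: leq_sum => j _; exact: amgm2.
have e1 : \sum_(i in X) \sum_(j in X) (2 * (f i * f j)) = 2 * (\sum_(i in X) f i) ^ 2.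
  rewrite expnS expn1 big_distrl big_distrr /=; apply: eq_bigr => i _.
  rewrite big_distrr big_distrr /=; apply: eq_bigr => j _; lia.
have e2 : \sum_(i in X) \sum_(j in X) (f i ^ 2 + f j ^ 2) = 2 * (#|X| * \sum_(i in X) f i ^ 2).
  under eq_bigr do rewrite big_split /= sum_nat_const.
  rewrite big_split /= sum_nat_const -big_distrr /=; lia.
rewrite e1 e2 leq_pmul2l in step => //.
Qed.

Definition dg n (E : {set {set 'I_n}}) (A : {set 'I_n}) := #|[set e in E | A \subset e]|.
Arguments dg {n}.

Lemma dg_le n r (E : {set {set 'I_n}}) e a :
  (forall f, f \in E -> #|f| = r) -> e \in E -> a \in e ->
  dg E (e :\ a) <= 1 + #|[set v in ~: e | v |: (e :\ a) \in E]|.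
Proof.
move=> hE eE ae.
set V := [set v in ~: e | _].
have ca : #|e :\ a| = r.-1.
  have := cardsD1 a e; rewrite ae (hE _ eE) /=; lia.
have sub : [set e' in E | e :\ a \subset e'] \subset e |: [set v |: (e :\ a) | v in V].
  apply/subsetP => e'; rewrite inE => /andP [e'E se'].
  have /cards1P [w Hw] : #|e' :\: (e :\ a)| == 1.
    rewrite cardsDS // (hE _ e'E) ca; apply/eqP.
    have := cardsD1 a e; rewrite ae (hE _ eE) /=; lia.
  have ee' : e' = w |: (e :\ a).
    by rewrite -[e' in LHS](setID e' (e :\ a)) (setIidPr se') Hw setUC.
  have : w \in e' :\: (e :\ a) by rewrite Hw set11.
  rewrite !inE => /andP [wnB we'].
  case: (eqVneq w a) => [wa | wa].
    by rewrite ee' wa setD1K // eqxx.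
  rewrite wa /= in wnB.
  apply/orP; right; apply/imsetP; exists w => //.
  by rewrite !inE wnB -ee' e'E.
apply: leq_trans (subset_leq_card sub) _.
rewrite cardsU1; apply: leq_add; first by case: (_ \notin _).
exact: leq_imset_card.
Qed.

Lemma ksub_eq n r (e : {set 'I_n}) : #|e| = r -> 0 < r ->
  [set A in [set A : {set 'I_n} | #|A| == r.-1] | A \subset e] = [set e :\ a | a in e].
Proof.
move=> ce r0; apply/setP => A; rewrite !inE; apply/andP/imsetP.
  move=> [/eqP cA sAe].
  have /cards1P [a Ha] : #|e :\: A| == 1.
    by rewrite cardsDS // ce cA; apply/eqP; lia.
  have : a \in e :\: A by rewrite Ha set11.
  rewrite inE => /andP [aA ae]; exists a => //.
  apply/eqP; rewrite eqEcard; apply/andP; split.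
    apply/subsetP => y yA; rewrite !inE (subsetP sAe _ yA) ?andbT.
    by apply: contraNneq aA => <-.
  have := cardsD1 a e; rewrite ae ce cA /=; lia.
move=> [a ae ->]; split; last exact: subD1set.
apply/eqP; have := cardsD1 a e; rewrite ae ce /=; lia.
Qed.

Lemma inj_D1 n (e : {set 'I_n}) : {in e &, injective (fun a => e :\ a)}.
Proof.
move=> a b ae be H; apply/eqP; apply: contraT => nab.
have : a \in e :\ b by rewrite !inE nab ae.
by rewrite -H !inE eqxx.
Qed.
Arguments dg_le {n r E e a}.
Arguments ksub_eq {n r e}.
Arguments inj_D1 {n e}.

Lemma from_nD n r (E : {set {set 'I_n}}) :
  is_rgraph r E -> ~~ contains_Delta r E ->
  forall e v, e \in E -> v \notin e -> exists2 a, a \in e & v |: (e :\ a) \notin E.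
Proof.
move=> hR hND e v eE ve.
have ce : #|e| = r by move/forall_inP: hR => /(_ e eE) /eqP.
set S := v |: e.
have cS : #|S| = r.+1 by rewrite cardsU1 ve ce.
have : ~~ [forall f : {set 'I_n}, ((f \subset S) && (#|f| == r)) ==> (f \in E)].
  apply: contra hND => H; apply/existsP; exists S; by rewrite cS eqxx H.
rewrite negb_forall => /existsP [f]; rewrite negb_imply => /andP [/andP [fS /eqP cf] fE].
have /cards1P [x Hx] : #|S :\: f| == 1 by rewrite cardsDS // cS cf subSnn.
have : x \in S :\: f by rewrite Hx set11.
rewrite inE => /andP [xf xS].
have fe : f = S :\ x.
  apply/eqP; rewrite eqEcard; apply/andP; split.
    apply/subsetP => y yf; rewrite !inE; apply/andP; split.
      by apply: contraNneq xf => <-.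
    by move: (subsetP fS _ yf); rewrite !inE.
  have := cardsD1 x S; rewrite xS cS cf /=; lia.
case: (eqVneq x v) => [xv | xv].
  by move: fE; rewrite fe xv setU1K // eE.
have xe : x \in e by move: xS; rewrite !inE (negbTE xv).
exists x => //.
have -> : v |: (e :\ x) = S :\ x.
  apply/setP => y; rewrite !inE.
  case: (eqVneq y v) => [->|yv] /=; first by rewrite eq_sym xv.
  by [].
by rewrite -fe.
Qed.

Lemma sum_bound n r (E : {set {set 'I_n}}) e :
  (forall f, f \in E -> #|f| = r) ->
  (forall e v, e \in E -> v \notin e -> exists2 a, a \in e & v |: (e :\ a) \notin E) ->
  e \in E -> \sum_(a in e) dg E (e :\ a) <= r + (n - r) * r.-1.
Proof.
move=> hE hD eE.
have H : \sum_(a in e) dg E (e :\ a) <= \sum_(a in e) (1 + #|[set v in ~: e | v |: (e :\ a) \in E]|).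
  by apply: leq_sum => a ae; exact: (dg_le hE eE ae).
apply: leq_trans H _.
rewrite big_split /= sum_nat_const (hE _ eE) muln1 leq_add2l.
under eq_bigr do rewrite card_sum.
rewrite exchange_big /=.
have cC : #|~: e| = n - r.
  have := cardsC e; rewrite (hE _ eE) card_ord; move: #|~: e| => k. by move=> <-; rewrite addKn.
rewrite -cC -sum_nat_const; apply: leq_sum => v; rewrite inE => ve.
rewrite -card_sum.
have : #|[set a in e | v |: (e :\ a) \in E]| < #|e|.
  apply: proper_card; apply/properP; split.
    by apply/subsetP => a; rewrite inE => /andP [].
  have [a ae aE] := hD e v eE ve.
  by exists a => //; rewrite inE ae (negbTE aE).
rewrite (hE _ eE); case: (r) => // r'; exact.
Qed.

Lemma s1 n r (E : {set {set 'I_n}}) : 0 < r -> (forall f, f \in E -> #|f| = r) ->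
  \sum_(A in [set A : {set 'I_n} | #|A| == r.-1]) dg E A = r * #|E|.
Proof.
move=> r0 hE.
under eq_bigr do rewrite /dg card_sum.
rewrite exchange_big /=.
under eq_bigr => e eE do rewrite -card_sum (ksub_eq (hE _ eE) r0) (card_in_imset inj_D1) (hE _ eE).
by rewrite sum_nat_const mulnC.
Qed.

Lemma s2 n r (E : {set {set 'I_n}}) : 0 < r -> (forall f, f \in E -> #|f| = r) ->
  (forall e v, e \in E -> v \notin e -> exists2 a, a \in e & v |: (e :\ a) \notin E) ->
  \sum_(A in [set A : {set 'I_n} | #|A| == r.-1]) dg E A ^ 2 <= #|E| * (r + (n - r) * r.-1).
Proof.
move=> r0 hE hD.
have -> : \sum_(A in [set A : {set 'I_n} | #|A| == r.-1]) dg E A ^ 2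
    = \sum_(e in E) \sum_(a in e) dg E (e :\ a).
  transitivity (\sum_(A in [set A : {set 'I_n} | #|A| == r.-1])
       \sum_(e in E) ((A \subset e) * dg E A)).
    apply: eq_bigr => A _; rewrite expnS expn1 {1}/dg card_sum big_distrl /=.
    by [].
  rewrite exchange_big /=; apply: eq_bigr => e eE.
  have -> : \sum_(a in e) dg E (e :\ a) = \sum_(A in [set e :\ a | a in e]) dg E A.
    by rewrite big_imset //; exact: inj_D1.
  rewrite -(ksub_eq (hE _ eE) r0).
  rewrite [RHS]big_mkcond [LHS]big_mkcond /=; apply: eq_bigr => A _.
  rewrite !inE; case: (#|A| == r.-1); case: (A \subset e) => //=.
  by rewrite mul1n.
have H : \sum_(e in E) \sum_(a in e) dg E (e :\ a) <= \sum_(e in E) (r + (n - r) * r.-1).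
  by apply: leq_sum => e eE; exact: sum_bound.
by apply: leq_trans H _; rewrite sum_nat_const.
Qed.

Lemma main_nat n r (E : {set {set 'I_n}}) : 0 < r -> r <= n ->
  is_rgraph r E -> ~~ contains_Delta r E ->
  #|E| * (r * (n - r)) <= ((r - 1) * (n - r + 1) + 1) * 'C(n, r).
Proof.
move=> r0 rn hR hND.
have hE : forall f, f \in E -> #|f| = r.
  by move=> f fE; move/forall_inP: hR => /(_ f fE) /eqP.
have hD := from_nD _ _ _ hR hND.
have cs := cs_nat _ [set A : {set 'I_n} | #|A| == r.-1] (dg E).
rewrite (s1 _ _ _ r0 hE) card_draws card_ord in cs.
have h2 := s2 n _ _ r0 hE hD.
have hb := mul_bin_left n r.-1; rewrite prednK // in hb.
move: cs h2 hb; move: (\sum_(A in _) _) => S2; move: #|E| => M.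
move: ('C(n, r.-1)) => C1; move: ('C(n, r)) => C.
move=> cs h2 hb.
have K : r + (n - r) * r.-1 = (r - 1) * (n - r + 1) + 1 by nia.
rewrite K in h2; move: ((r - 1) * (n - r + 1) + 1) h2 => K' h2.
have e1 : (r * M) ^ 2 <= C1 * (M * K') := leq_trans cs (leq_mul (leqnn C1) h2).
case: (posnP M) => [-> | M0]; first by rewrite mul0n.
have e2 : r * r * M <= C1 * K'.
  rewrite -(leq_pmul2l M0).
  have -> : M * (r * r * M) = (r * M) ^ 2 by lia.
  have -> : M * (C1 * K') = C1 * (M * K') by lia.
  exact: e1.
have e3 : r * (r * M * (n - r.-1)) <= r * (C * K').
  have -> : r * (r * M * (n - r.-1)) = r * r * M * (n - r.-1) by lia.
  have -> : r * (C * K') = (n - r.-1) * C1 * K' by rewrite -hb; lia.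
  have -> : (n - r.-1) * C1 * K' = C1 * K' * (n - r.-1) by lia.
  by rewrite leq_mul2r e2 orbT.
rewrite leq_pmul2l // in e3.
rewrite [K' * C]mulnC; apply: leq_trans e3.
have -> : r * M * (n - r.-1) = r * (n - r.-1) * M by lia.
rewrite mulnC leq_mul2r; apply/orP; right; rewrite leq_mul2l; apply/orP; right; lia.
Qed.
Import Order.TTheory GRing.Theory Num.Theory.
Local Open Scope ring_scope.

Theorem mainTheorem7 (r n : nat) (hr : (2 <= r)%N) (hn : (r.+1 <= n)%N) :
  (ex_Delta r n)%:R <=
    ((((r - 1) * (n - r + 1) + 1)%N)%:R / ((r * (n - r))%N)%:R)
      * ('C(n, r))%:R :> rat.
Proof.
have r0 : (0 < r)%N by lia.
have rn : (r <= n)%N by lia.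
have D0 : (0 < r * (n - r))%N by rewrite muln_gt0 r0 subn_gt0.
have H : (ex_Delta r n * (r * (n - r)) <= ((r - 1) * (n - r + 1) + 1) * 'C(n, r))%N.
  have : (ex_Delta r n <= (((r - 1) * (n - r + 1) + 1) * 'C(n, r)) %/ (r * (n - r)))%N.
    apply/bigmax_leqP => E /andP [hR hND]; rewrite leq_divRL //; exact: main_nat.
  by rewrite leq_divRL.
rewrite mulrAC ler_pdivlMr ?ltr0n // -!natrM ler_nat.
exact: H.
Qed.
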